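(* For any sequence $1>r_1>r_2>\cdots$ decreasing to $0$, there is a distribution $\boldsymbol{\mu}\in\Delta_\mathbb{N}$ such that $2\,\mathbb{E}_{\boldsymbol{X}\sim\boldsymbol{\mu}^m}\|\boldsymbol{\mu}-\widehat{\boldsymbol{\mu}}_m\|_{TV}>r_m$ for all $m\ge1$.
   Context: $\Delta_\mathbb{N}$ is the set of probability distributions on $\mathbb{N}=\{1,2,\dots\}$. $\widehat{\boldsymbol{\mu}}_m(i)=\frac1m\sum_{t=1}^m\mathbb{I}\{X_t=i\}$ for $\boldsymbol{X}=(X_1,\dots,X_m)$. $\|\boldsymbol{\mu}-\boldsymbol{\nu}\|_{TV}=\frac12\sum_i|\boldsymbol{\mu}(i)-\boldsymbol{\nu}(i)|$. *)

(* Defs.v *)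
From HB Require Import structures.
From mathcomp Require Import all_boot all_order all_algebra.
From mathcomp Require Import all_classical all_reals all_analysis.
Set Implicit Arguments. Unset Strict Implicit. Unset Printing Implicit Defensive.
Import Order.TTheory GRing.Theory Num.Theory.
Local Open Scope classical_set_scope.
Local Open Scope ring_scope.

(* Distributions on N = {1,2,...}, represented as functions nat -> R that
   vanish at 0 (so the support lies in {1,2,...}), are nonnegative and
   have total mass 1 (countable sum in the extended reals). *)
Definition distrN (R : realType) (mu : nat -> R) : Prop :=
  [/\ mu 0%N = 0, (forall i, 0 <= mu i) &
      (\esum_(i in [set: nat]) (mu i)%:E = 1)%E].

Definition empirical (R : realType) (m : nat) (X : m.-tuple nat) (i : nat) : R :=
  (count_mem i X)%:R / m%:R.

Definition tv_dist (R : realType) (mu nu : nat -> R) : \bar R :=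
  ((1/2 : R)%:E * \esum_(i in [set: nat]) `|mu i - nu i|%:E)%E.

(* E_{X ~ mu^m} || mu - hat mu_m ||_TV, as the countable sum over samples
   X in N^m weighted by the product probability prod_t mu(X_t). *)
Definition expected_tv (R : realType) (mu : nat -> R) (m : nat) : \bar R :=
  (\esum_(X in [set: m.-tuple nat])
      (\prod_(t < m) mu (tnth X t))%:E * tv_dist mu (@empirical R m X))%E.

(* Main.v *)
Require Import Defs.
From HB Require Import structures.
From mathcomp Require Import all_boot all_order all_algebra.
From mathcomp Require Import all_classical all_reals all_analysis.
From mathcomp Require Import ring lra.
Import Order.TTheory GRing.Theory Num.Theory.
Local Open Scope classical_set_scope.
Local Open Scope ring_scope.

Lemma fsbigT_fin (R : realType) (T : finType) (F : T -> \bar R) :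
  (\sum_(i \in [set: T]) F i = \sum_(i : T) F i)%E.
Proof.
rewrite (fsbigTE (finmap.seq_fset tt (enum T))); last by move=> i; rewrite finmap.seq_fsetE mem_enum.
rewrite (perm_big _ (finmap.seq_fset_perm _ _)) undup_id ?enum_uniq //.
by rewrite big_enum.
Qed.
Lemma r_mono (R : realType) (r : nat -> R) :
  (forall n, (1 <= n)%N -> r n.+1 < r n) ->
  forall n k, (1 <= n)%N -> (n <= k)%N -> r k <= r n.
Proof.
move=> Hd n k Hn; elim: k => [|k IH]; first by rewrite leqn0 => /eqP Hn0; move: Hn; rewrite Hn0.
rewrite leq_eqVlt => /orP[/eqP -> //|]; rewrite ltnS => Hk.
by apply: le_trans (IH Hk); apply/ltW/Hd/(leq_trans Hn Hk).
Qed.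

Lemma r_pos (R : realType) (r : nat -> R) :
  (forall n, (1 <= n)%N -> r n.+1 < r n) -> r @ \oo --> 0 ->
  forall n, (1 <= n)%N -> 0 < r n.
Proof.
move=> Hd /cvgrPdist_lt H n Hn; rewrite ltNge; apply/negP => Hr.
have Hn1 : r n.+1 < 0 by apply: lt_le_trans (Hd n Hn) Hr.
have [N0 _ HN] := H (- r n.+1) ltac:(by rewrite oppr_gt0).
have := HN (maxn N0 n.+1) (leq_maxl _ _); rewrite /= sub0r normrN.
have Hk : r (maxn N0 n.+1) <= r n.+1 by apply: r_mono => //; exact: leq_maxr.
rewrite ler0_norm ?ltrN2; last by apply: le_trans Hk (ltW Hn1).
by rewrite ltNge Hk.
Qed.

Definition Tf {R : realType} (r : nat -> R) (a : R) (c k : nat) : R :=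
  if (k < c)%N then 1 else r (2 ^ (k - c))%N / a.

Definition muf {R : realType} (r : nat -> R) (a : R) (c i : nat) : R :=
  if i == 0%N then 0 else
  (Tf r a c (trunc_log 2 i) - Tf r a c (trunc_log 2 i).+1) / (2 ^ (trunc_log 2 i))%:R.


Lemma lim_small (R : realType) (r : nat -> R) : r @ \oo --> 0 ->
  forall e : R, 0 < e -> exists N0, forall n, (N0 <= n)%N -> r n < e.
Proof.
move=> /cvgrPdist_lt H e e0; have [N0 _ HN] := H e e0.
exists N0 => n Hn; have := HN n Hn; rewrite /= sub0r normrN.
by apply: le_lt_trans; exact: ler_norm.
Qed.

Lemma bern (R : realType) (y : R) m : 0 <= y -> 1 - m%:R * (1 - y) <= y ^+ m.
Proof.
move=> y0; elim: m => [|m IH]; first by rewrite mul0r subr0 expr0.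
rewrite exprS; apply: le_trans (ler_wpM2l y0 IH).
have hm : 0 <= m%:R :> R by apply: ler0n.
rewrite -natr1 -subr_ge0.
have -> : y * (1 - m%:R * (1 - y)) - (1 - (m%:R + 1) * (1 - y)) = m%:R * (1 - y) ^+ 2 by ring.
by apply: mulr_ge0 => //; apply: sqr_ge0.
Qed.


Section TT.
Variables (R : realType) (r : nat -> R) (a : R) (c : nat).
Hypothesis Hd : forall n, (1 <= n)%N -> r n.+1 < r n.
Hypothesis Hp : forall n, (1 <= n)%N -> 0 < r n.
Hypothesis Ha : r 1%N < a.
Hypothesis Hc : (1 <= c)%N.

Lemma a_gt0 : 0 < a. Proof. by apply: lt_trans Ha; apply: Hp. Qed.

Lemma T0 : Tf r a c 0 = 1. Proof. by rewrite /Tf Hc. Qed.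

Lemma T_ge0 k : 0 <= Tf r a c k.
Proof. rewrite /Tf; case: ifP => // _; apply/ltW/divr_gt0/a_gt0/Hp; exact: expn_gt0. Qed.

Lemma T_le1 k : Tf r a c k <= 1.
Proof.
rewrite /Tf; case: ifP => // _; rewrite ler_pdivrMr ?a_gt0 // mul1r.
apply/ltW/(le_lt_trans _ Ha)/r_mono => //; exact: expn_gt0.
Qed.

Lemma T_dec k : Tf r a c k.+1 <= Tf r a c k.
Proof.
rewrite /Tf; case: (ltnP k.+1 c) => H1.
  by rewrite ifT // (ltn_trans _ H1).
case: ifP => H2; first by have := T_le1 k.+1; rewrite /Tf ltnNge H1.
rewrite ler_pM2r ?invr_gt0 ?a_gt0 //; apply: r_mono => //; first exact: expn_gt0.
by rewrite leq_exp2l // subSn // leqNgt H2.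
Qed.

Lemma mu_ge0 i : 0 <= muf r a c i.
Proof.
rewrite /muf; case: ifP => // _; apply: divr_ge0; last exact: ler0n.
by rewrite subr_ge0 T_dec.
Qed.

Lemma mu_le K i : (2 ^ K <= i)%N -> muf r a c i <= 1 / (2 ^ K)%:R.
Proof.
move=> Hi; rewrite /muf; case: ifP => [_|_]; first by rewrite divr_ge0.
have HK : (K <= trunc_log 2 i)%N by apply: trunc_log_max.
apply: le_trans (_ : 1 / (2 ^ trunc_log 2 i)%:R <= _).
  rewrite ler_pM2r; last by rewrite invr_gt0 ltr0n expn_gt0.
  have := T_le1 (trunc_log 2 i); have := T_ge0 (trunc_log 2 i).+1; lra.
rewrite !mul1r lef_pV2 ?posrE ?ltr0n ?expn_gt0 // ler_nat leq_exp2l //.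
Qed.

Lemma sum_mu L : \sum_(0 <= i < 2 ^ L) muf r a c i = 1 - Tf r a c L.
Proof.
elim: L => [|L IH]; first by rewrite expn0 big_nat1 /muf eqxx T0 subrr.
rewrite (big_cat_nat (n := 2 ^ L)) //=; last by rewrite leq_exp2l.
rewrite IH (eq_big_nat _ _ (F2 := fun _ => (Tf r a c L - Tf r a c L.+1) / (2 ^ L)%:R)).
  rewrite sumr_const_nat expnS mul2n -addnn addnK -[(_ / _) *+ _]mulr_natr mulfVK; first by rewrite addrA subrK.
  by rewrite pnatr_eq0 -lt0n expn_gt0.
move=> i /andP[H1 H2]; rewrite /muf ifF; last first.
  by apply/negbTE; rewrite -lt0n; apply: leq_trans H1; rewrite expn_gt0.
by rewrite (trunc_log_eq (n := L)) // H1 H2.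
Qed.

Hypothesis Hl : r @ \oo --> 0.

Lemma T_mono k l : (k <= l)%N -> Tf r a c l <= Tf r a c k.
Proof.
elim: l => [|l IH]; first by rewrite leqn0 => /eqP ->.
rewrite leq_eqVlt => /orP[/eqP -> //|]; rewrite ltnS => H.
exact: le_trans (T_dec _) (IH H).
Qed.

Lemma sum_mu_ord L : \sum_(j < 2 ^ L) muf r a c j = 1 - Tf r a c L.
Proof. by rewrite -(big_mkord xpredT) sum_mu. Qed.

Lemma sum_mu_tail K L : (K <= L)%N ->
  \sum_(i < 2 ^ L) (if (2 ^ K <= i)%N then muf r a c i else 0) = Tf r a c K - Tf r a c L.
Proof.
move=> KL; have KL' : (2 ^ K <= 2 ^ L)%N by rewrite leq_exp2l.
rewrite -(big_mkord xpredT (fun i => if (2 ^ K <= i)%N then muf r a c i else 0)).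
rewrite (big_cat_nat (n := 2 ^ K)) //= big_nat_cond big1 ?add0r; last first.
  by move=> i /andP[/andP[_ H] _]; rewrite leqNgt H.
rewrite (eq_big_nat _ _ (F2 := muf r a c)); last by move=> i /andP[-> _].
have := sum_mu L; rewrite (big_cat_nat (n := 2 ^ K)) //= sum_mu //.
by move=> H; rewrite -[LHS](addKr (1 - Tf r a c K)) H; ring.
Qed.

Lemma mu_esum : (\esum_(i in [set: nat]) (muf r a c i)%:E = 1)%E.
Proof.
have mu0 n : (0 <= (muf r a c n)%:E)%E by rewrite lee_fin; exact: mu_ge0.
rewrite -nneseries_esumT //; apply/eqP; rewrite eq_le; apply/andP; split.
  apply: lime_le; first exact: is_cvg_nneseries.
  apply: nearW => n; rewrite sumEFin lee_fin.
  have Hn : (n <= 2 ^ n)%N by apply/ltnW/ltn_expl.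
  apply: le_trans (_ : \sum_(0 <= i < 2 ^ n) muf r a c i <= _).
    rewrite (big_cat_nat (leq0n n) Hn) /= lerDl.
    by apply: sumr_ge0 => i _; apply: mu_ge0.
  by rewrite sum_mu // gerBl T_ge0.
apply/lee_addgt0Pr => e e0.
have a0 : 0 < a by apply: lt_trans Ha; apply: Hp.
have [N0 HN] := @lim_small R r Hl _ (mulr_gt0 e0 a0).
have HTL : Tf r a c (N0 + c) < e.
  rewrite /Tf ltnNge leq_addl /= addnK ltr_pdivrMr //; apply: HN.
  by apply/ltnW/ltn_expl.
have := @nneseries_lim_ge R (fun i => (muf r a c i)%:E) xpredT 0 (2 ^ (N0 + c)) (fun n _ _ => mu0 n).
rewrite sumEFin sum_mu // => H.
apply: le_trans (leeD H (lexx _)).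
by rewrite -EFinD lee_fin; lra.
Qed.

End TT.

Definition gtup {m N : nat} (f : {ffun 'I_m -> 'I_N}) : m.-tuple nat :=
  [tuple (nat_of_ord (f t)) | t < m].

Lemma gtup_inj m N : injective (@gtup m N).
Proof.
move=> f1 f2 /(congr1 (fun X => tnth X)) H; apply/ffunP => t; apply/val_inj.
by have := congr1 (fun h => h t) H; rewrite /= !tnth_mktuple.
Qed.

Lemma exp_tv_ge (R : realType) (mu : nat -> R) m N :
  (\sum_(f : {ffun 'I_m -> 'I_N})
     ((\prod_(t < m) mu (f t))%:E * tv_dist mu (@empirical R m (gtup f)))
   <= expected_tv mu m)%E.
Proof.
rewrite /expected_tv; apply: esum_ge; exists (@gtup m N @` setT).
  by split => //; apply: finite_image; exact: finite_finset.
rewrite fsbig_image; last by move=> x y _ _; apply: gtup_inj.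
rewrite fsbigT_fin le_eqVlt; apply/orP; left; apply/eqP/eq_bigr => f _.
by congr (_ * _)%E; congr (_%:E); apply: eq_bigr => t _; rewrite tnth_mktuple.
Qed.

Lemma tv_ge (R : realType) (mu : nat -> R) m (X : m.-tuple nat) N K :
  (forall i, 0 <= mu i) ->
  ((1/2 : R)%:E * (\sum_(i < N) (if (K <= i)%N && (nat_of_ord i \notin X) then mu i else 0))%:E
   <= tv_dist mu (@empirical R m X))%E.
Proof.
move=> mu0; rewrite /tv_dist; apply: lee_wpmul2l; first by rewrite lee_fin.
apply: esum_ge; exists `I_N; first by split => //; exact: finite_II.
rewrite -fsbig_ord sumEFin lee_fin; apply: ler_sum => i _.
case: ifP => [/andP[_ Hi]|_]; last exact: normr_ge0.
rewrite /empirical (count_memPn Hi) mul0r subr0 ger0_norm //.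
Qed.

Lemma comb (R : realType) (mu : nat -> R) m N K :
  \sum_(f : {ffun 'I_m -> 'I_N}) ((\prod_(t < m) mu (f t)) *
     (\sum_(i < N) (if (K <= i)%N && (nat_of_ord i \notin gtup f) then mu i else 0)))
  = \sum_(i < N) (if (K <= i)%N then mu i * (\sum_(j < N) mu j - mu i) ^+ m else 0).
Proof.
under eq_bigr do rewrite mulr_sumr.
rewrite exchange_big /=; apply: eq_bigr => i _.
case: (K <= i)%N => /=; last by rewrite big1 // => f _; rewrite mulr0.
have E (f : {ffun 'I_m -> 'I_N}) : (\prod_(t < m) mu (f t)) * (if nat_of_ord i \notin gtup f then mu i else 0)
    = mu i * \prod_(t < m) (mu (f t) * (f t != i)%:R).
  rewrite big_split /= mulrC; case: ifP => Hi.
    rewrite [X in _ * (_ * X)]big1 ?mulr1 //= => t _.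
    case: eqP => // Ht; move/negP: Hi; case; rewrite -Ht.
    by have := mem_tnth t (gtup f); rewrite tnth_mktuple.
  move/negbFE/tnthP: Hi => [t]; rewrite tnth_mktuple => /val_inj Ht.
  by rewrite mul0r [X in _ = _ * (_ * X)](bigD1 t) //= -Ht eqxx mul0r !mulr0.

under eq_bigr do rewrite E; rewrite -mulr_sumr; congr (_ * _).
rewrite -(bigA_distr_bigA (fun (t : 'I_m) (j : 'I_N) => mu j * (j != i)%:R)) /=.
rewrite prodr_const card_ord; congr (_ ^+ _).
rewrite [in RHS](bigD1 i) //= [in LHS](bigD1 i) //= eqxx mulr0 add0r addrC addrK.
by apply: eq_bigr => j Hj; rewrite Hj mulr1.
Qed.

Lemma main_lb (R : realType) (mu : nat -> R) m N K : (forall i, 0 <= mu i) ->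
  ((\sum_(i < N) (if (K <= i)%N then mu i * (\sum_(j < N) mu j - mu i) ^+ m else 0))%:E
    <= 2%:E * expected_tv mu m)%E.
Proof.
move=> mu0; rewrite -comb -sumEFin.
have H2 : (0 <= 2%:E :> \bar R)%E by rewrite lee_fin.
apply: le_trans (lee_wpmul2l H2 (@exp_tv_ge R mu m N)).
rewrite ge0_sume_distrr; last first.
  move=> f _; apply: mule_ge0; first by rewrite lee_fin; apply: prodr_ge0.
  by rewrite /tv_dist; apply: mule_ge0; [rewrite lee_fin|apply: esum_ge0].
apply: lee_sum => f _.
have H := @tv_ge R mu m (gtup f) N K mu0.
have P0 : (0 <= (\prod_(t < m) mu (f t))%:E)%E by rewrite lee_fin; apply: prodr_ge0.
apply: le_trans (lee_wpmul2l H2 (lee_wpmul2l P0 H)).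
rewrite -!EFinM lee_fin le_eqVlt; by apply/orP; left; apply/eqP; field.
Qed.

Theorem proposition2 (R : realType) (r : nat -> R) :
  r 1%N < 1 ->
  (forall n, (1 <= n)%N -> r n.+1 < r n) ->
  r @ \oo --> 0 ->
  exists mu : nat -> R, distrN mu /\
    forall m : nat, (1 <= m)%N -> ((r m)%:E < 2%:E * expected_tv mu m)%E.
Proof.
move=> Hr1 Hd Hl.
have Hp := @r_pos R r Hd Hl.
pose a := (1 + r 1%N) / 2.
have Ha : r 1%N < a by rewrite /a; lra.
have Ha1 : a < 1 by rewrite /a; lra.
have a0 : 0 < a by apply: lt_trans Ha; apply: Hp.
have b0 : 0 <= 2 / (1 - a) by apply: divr_ge0 => //; lra.
have Hn0 := archi_boundP b0.
set n0 := Num.Def.archi_bound _ in Hn0.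
pose c := n0.+1.
have Hc : (1 <= c)%N by [].
have Hc2 : (n0 < 2 ^ c)%N by apply: ltn_trans (ltnSn n0) (ltn_expl _ _).
pose eps := 2 / (2 ^ c)%:R : R.
have Q0 : 0 < (2 ^ c)%:R :> R by rewrite ltr0n expn_gt0.
have Heps : eps < 1 - a.
  rewrite /eps ltr_pdivrMr // -ltr_pdivrMl; last by lra.
  rewrite mulrC; apply: lt_trans Hn0 _; rewrite ltr_nat; exact: Hc2.
have eps0 : 0 <= eps by apply: divr_ge0 => //; apply: ltW.
exists (muf r a c); split.
  split; [by rewrite /muf eqxx | exact: mu_ge0 | exact: mu_esum].
move=> m Hm.
pose K := (trunc_log 2 m + c)%N.
pose x := Tf r a c K.
have Hx : x = r (2 ^ trunc_log 2 m)%N / a by rewrite /x /Tf ltnNge leq_addl /= addnK.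
have Hrm : r m <= r (2 ^ trunc_log 2 m)%N.
  by apply: r_mono => //; [exact: expn_gt0 | exact: trunc_logP].
have rm0 : 0 < r m by apply: Hp.
have Hgap : 0 < x * (1 - eps) - r m.
  have u0 : 0 < r m / a by apply: divr_gt0.
  have Hxu : r m / a <= x by rewrite Hx ler_pM2r // invr_gt0.
  have -> : x * (1 - eps) - r m = (x - r m / a) * (1 - eps) + r m / a * ((1 - eps) - a).
    by rewrite /eps; field; lra.
  apply: ltr_pwDr; first by apply: mulr_gt0 => //; lra.
  by apply: mulr_ge0; lra.
pose g := (x * (1 - eps) - r m) / (m.+1)%:R : R.
have g0 : 0 < g by apply: divr_gt0.
have [N0 HN] := @lim_small R r Hl (g * a) (mulr_gt0 g0 a0).
pose L := (N0 + c + K)%N.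
pose y := Tf r a c L.
have HKL : (K <= L)%N by rewrite /L leq_addl.
have Hy : (m.+1)%:R * y < x * (1 - eps) - r m.
  have -> : x * (1 - eps) - r m = (m.+1)%:R * g by rewrite /g [RHS]mulrC divfK // pnatr_eq0.
  have HcL : (c <= L)%N by rewrite /L; exact: leq_trans (leq_addl N0 c) (leq_addr K _).
  have HLc : (L - c = N0 + K)%N by rewrite /L addnAC addnK.
  rewrite ltr_pM2l ?ltr0n // /y /Tf ltnNge HcL /= HLc.
  rewrite ltr_pdivrMr //; apply: HN; apply: leq_trans (ltnW (ltn_expl _ _)) => //.
  exact: leq_addr.
have y0 : 0 <= y by apply: T_ge0.
have yx : y <= x by apply: T_mono.
have x1 : x <= 1 by apply: T_le1.
pose M := m%:R : R.
have M0 : 0 <= M by apply: ler0n.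
pose d := 1 / (2 ^ K)%:R : R.
have d0 : 0 <= d by apply: divr_ge0 => //; apply: ler0n.
have Md : M * d <= eps.
  rewrite /M /d /eps /K expnD natrM mul1r.
  have T0 : 0 < (2 ^ trunc_log 2 m)%:R :> R by rewrite ltr0n expn_gt0.
  have -> : 2 / (2 ^ c)%:R = (2 * (2 ^ trunc_log 2 m)%:R) / ((2 ^ trunc_log 2 m)%:R * (2 ^ c)%:R) :> R.
    by field; apply/andP; split; apply: lt0r_neq0.
  rewrite ler_pM2r ?invr_gt0 ?mulr_gt0 // -natrM ler_nat -expnS.
  exact: ltnW (trunc_log_ltn _ _).
have main := @main_lb R (muf r a c) m (2 ^ L)%N (2 ^ K)%N (@mu_ge0 R r a c Hd Hp Ha).
apply: lt_le_trans main; rewrite lte_fin sum_mu_ord // -/y.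
apply: (@lt_le_trans _ _ ((1 - M * (y + d)) * (x - y))).
  have E1 : 0 <= M * y * (1 - x) by apply: mulr_ge0; [apply: mulr_ge0 | lra].
  have E2 : 0 <= x * (eps - M * d) by apply: mulr_ge0; lra.
  have E3 : 0 <= M * y * y by apply: mulr_ge0; [apply: mulr_ge0|].
  have E4 : 0 <= y * (M * d) by apply: mulr_ge0; [|apply: mulr_ge0].
  have HM1 : (m.+1)%:R = M + 1 by rewrite /M -natr1.
  rewrite HM1 in Hy.
  have -> : (1 - M * (y + d)) * (x - y) = (x * (1 - eps) - (M + 1) * y) +
     (M * y * (1 - x) + x * (eps - M * d) + M * y * y + y * (M * d)) by ring.
  apply: lt_le_trans (_ : x * (1 - eps) - (M + 1) * y <= _); first lra.
  rewrite lerDl; apply: addr_ge0; [apply: addr_ge0; [apply: addr_ge0|]|] => //.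
rewrite -(@sum_mu_tail R r a c Hc K L HKL) mulr_sumr; apply: ler_sum => i _.
case: ifP => Hi; last by rewrite mulr0.
have mi0 := @mu_ge0 R r a c Hd Hp Ha i.
have mid : muf r a c i <= d by apply: mu_le.
have Si : muf r a c i <= 1 - y.
  rewrite /y -(@sum_mu_ord R r a c Hc L) (bigD1 i) //= lerDl; apply: sumr_ge0 => j _.
  exact: mu_ge0.
have B := @bern R (1 - y - muf r a c i) m ltac:(lra).
apply: le_trans (ler_wpM2l mi0 B).
have Hmd : M * muf r a c i <= M * d by apply: ler_wpM2l.
rewrite -/M [X in X <= _]mulrC -subr_ge0 -mulrBr; apply: (mulr_ge0 mi0); rewrite subr_ge0.
have -> : 1 - M * (1 - (1 - y - muf r a c i)) = 1 - M * y - M * muf r a c i by ring.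
have -> : 1 - M * (y + d) = 1 - M * y - M * d by ring.
lra.
Qed.
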